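(* Let $k\geq2$ be an integer. Suppose $\mu$ is a constant sum strong Rayleigh measure on $2^{[n]}$ such that $$\mathbb{P}[S:i\in S]=\sum_{S\ni i}\mu(\{S\})\leq\Big(\frac1{\sqrt{k-1}}-\frac1{\sqrt k}\Big)^2$$ for all $1\leq i\leq n$. Then the support of $\mu$ contains $k$ pairwise disjoint sets (i.e. the matroid whose set of bases is the support of $\mu$ has $k$ disjoint bases).
   Context: A discrete probability measure $\mu$ on $2^{[n]}$ has multivariate partition function $P_\mu(\mathbf{x})=\sum_{S\subseteq[n]}\mu(\{S\})\prod_{j\in S}x_j$; $\mu$ is strong Rayleigh if $P_\mu(\mathbf{x})\neq0$ whenever $\operatorname{Im}(x_j)>0$ for all $j$, and of constant sum $d$ if $|S|=d$ whenever $\mu(\{S\})\neq0$. The support of $\mu$ is $\{S:\mu(\{S\})>0\}$; for a constant sum strong Rayleigh measure the support is the set of bases of a matroid on $[n]$. *)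

(* Defs.v *)
From HB Require Import structures.
From mathcomp Require Import all_boot all_order all_algebra.
From mathcomp Require Import complex.
From mathcomp Require Import reals.
Set Implicit Arguments. Unset Strict Implicit. Unset Printing Implicit Defensive.
Import Order.TTheory GRing.Theory Num.Theory.
Local Open Scope ring_scope.

Definition prob_measure (R : realType) (n : nat) (mu : {ffun {set 'I_n} -> R}) :=
  (forall S, 0 <= mu S) /\ \sum_(S : {set 'I_n}) mu S = 1.

Definition partition_function (R : realType) (n : nat)
  (mu : {ffun {set 'I_n} -> R}) (x : 'I_n -> R[i]) : R[i] :=
  \sum_(S : {set 'I_n}) real_complex R (mu S) * \prod_(j in S) x j.

Definition strong_rayleigh (R : realType) (n : nat) (mu : {ffun {set 'I_n} -> R}) :=
  forall x : 'I_n -> R[i], (forall j, 0 < complex.Im (x j)) ->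
    partition_function mu x != 0.

Definition constant_sum (R : realType) (n : nat) (mu : {ffun {set 'I_n} -> R}) (d : nat) :=
  forall S, mu S != 0 -> #|S| = d.

Definition mu_support (R : realType) (n : nat) (mu : {ffun {set 'I_n} -> R}) : {set {set 'I_n}} :=
  [set S | 0 < mu S].

(* Main.v *)
Require Import Defs.
From HB Require Import structures.
From mathcomp Require Import all_boot all_order all_algebra.
From mathcomp Require Import complex.
From mathcomp Require Import reals.
From mathcomp Require Import ring lra zify.
Import Order.TTheory GRing.Theory Num.Theory.
Module PartP3.
Set Implicit Arguments. Unset Strict Implicit. Unset Printing Implicit Defensive.

Section Rank.
Variable T : finType.
Definition rankfun (r : {set T} -> nat) :=
  [/\ r set0 = 0,
      (forall A B : {set T}, A \subset B -> r A <= r B),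
      (forall (A : {set T}) x, r (x |: A) <= (r A).+1) &
      (forall A B : {set T}, r (A :|: B) + r (A :&: B) <= r A + r B)].

Lemma rank1 r e : rankfun r -> r [set e] <= 1.
Proof. case=> r0 _ ru _; have := ru set0 e; by rewrite setU0 r0. Qed.

Lemma rank_loop r e A : rankfun r -> r [set e] = 0 -> r (e |: A) = r A.
Proof.
case=> r0 rm ru rs he; apply/eqP; rewrite eqn_leq.
have -> : r A <= r (e |: A) by apply: rm; exact: subsetUr.
have := rs [set e] A; rewrite he; lia.
Qed.

Definition rcon (r : {set T} -> nat) e (Y : {set T}) := r (e |: Y) - r [set e].

Lemma rcon_rank r e : rankfun r -> rankfun (rcon r e).
Proof.
move=> hr; case: (hr) => r0 rm ru rs.
have ge (Y : {set T}) : r [set e] <= r (e |: Y) by apply: rm; rewrite sub1set setU11.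
split; rewrite /rcon.
- by rewrite setU0 subnn.
- move=> A B sAB; apply: leq_sub2r; apply: rm; exact: setUS.
- move=> A x; have := ru (e |: A) x; rewrite setUCA; have := ge A; have := ge (x |: A); lia.
- move=> A B; have := rs (e |: A) (e |: B).
  rewrite -setUUr -setUIr.
  have := ge A; have := ge B; have := ge (A :|: B); have := ge (A :&: B); lia.
Qed.

Theorem matroid_intersection (N : nat) : forall (X : {set T}) r1 r2 m,
  #|X| <= N -> rankfun r1 -> rankfun r2 ->
  (forall U : {set T}, U \subset X -> m <= r1 U + r2 (X :\: U)) ->
  exists I : {set T}, [/\ I \subset X, r1 I = #|I|, r2 I = #|I| & m <= #|I|].
Proof.
elim: N => [|N IH] X r1 r2 m hX h1 h2 hU.
  have X0 : X = set0 by apply/eqP; rewrite -cards_eq0; lia.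
  have := hU set0 (sub0set _); rewrite X0 setD0.
  case: (h1) => -> _ _ _; case: (h2) => -> _ _ _ => hm.
  exists set0; rewrite cards0 sub0set; case: (h1) => -> _ _ _; case: (h2) => -> _ _ _.
  split => //; lia.
case: (posnP m) => [->|mpos].
  exists set0; rewrite cards0 sub0set; case: (h1) => -> _ _ _; case: (h2) => -> _ _ _; by split.
case: (set_0Vmem X) => [X0|[e eX]].
  have := hU set0 (sub0set _); rewrite X0 setD0.
  case: (h1) => -> _ _ _; case: (h2) => -> _ _ _; lia.
have cXe : #|X :\ e| <= N by move: hX; rewrite (cardsD1 e X) eX; lia.
case: (boolP [forall U : {set T}, (U \subset X :\ e) ==> (m <= r1 U + r2 ((X :\ e) :\: U))]).
  move/forallP=> H.
  have [I [sI e1 e2 mI]] := IH (X :\ e) r1 r2 m cXe h1 h2 (fun (U : {set T}) sU => implyP (H U) sU).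
  exists I; split => //; apply: subset_trans sI _; exact: subD1set.
rewrite negb_forall => /existsP [U]; rewrite negb_imply -ltnNge => /andP [sU hUlt].
have eU : e \notin U by apply/negP => /(subsetP sU); rewrite !inE eqxx.
have sUX : U \subset X by apply: subset_trans sU _; exact: subD1set.
case: (h1) => r10 r1m r1u r1s; case: (h2) => r20 r2m r2u r2s.
have Xd (V : {set T}) : V \subset X :\ e -> X :\: V = e |: ((X :\ e) :\: V).
  move=> sV; apply/setP => x; rewrite !inE; case: (eqVneq x e) => [->|//].
  by rewrite eX andbT; apply/negP => /(subsetP sV); rewrite !inE eqxx.
have e1 : r1 [set e] = 1.
  have := rank1 e h1; case: (posnP (r1 [set e])) => [z|]; last lia.
  have := hU (e |: U); rewrite rank_loop //.
  have -> : X :\: (e |: U) = (X :\ e) :\: U.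
    by apply/setP => x; rewrite !inE; case: (x == e); rewrite ?andbF.
  move=> /(_ _); rewrite subUset sub1set eX sUX => /(_ isT); lia.
have e2 : r2 [set e] = 1.
  have := rank1 e h2; case: (posnP (r2 [set e])) => [z|]; last lia.
  have := hU U sUX; rewrite Xd // rank_loop //; lia.
have c1 := rcon_rank e h1; have c2 := rcon_rank e h2.
have ge1 (Y : {set T}) : r1 [set e] <= r1 (e |: Y) by apply: r1m; rewrite sub1set setU11.
have ge2 (Y : {set T}) : r2 [set e] <= r2 (e |: Y) by apply: r2m; rewrite sub1set setU11.
case: (boolP [forall W : {set T}, (W \subset X :\ e) ==>
     (m.-1 <= rcon r1 e W + rcon r2 e ((X :\ e) :\: W))]).
  move/forallP=> H.
  have [I [sI i1 i2 mI]] := IH (X :\ e) _ _ m.-1 cXe c1 c2 (fun (W : {set T}) sW => implyP (H W) sW).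
  have eI : e \notin I by apply/negP => /(subsetP sI); rewrite !inE eqxx.
  exists (e |: I); rewrite cardsU1 eI; split.
  - by rewrite subUset sub1set eX (subset_trans sI) ?subD1set.
  - move: i1; rewrite /rcon; have := ge1 I; lia.
  - move: i2; rewrite /rcon; have := ge2 I; lia.
  - lia.
rewrite negb_forall => /existsP [W]; rewrite negb_imply -ltnNge => /andP [sW hWlt].
have eW : e \notin W by apply/negP => /(subsetP sW); rewrite !inE eqxx.
move: hWlt; rewrite /rcon -Xd // => hWlt.
have s1 := r1s U (e |: W); have s2 := r2s ((X :\ e) :\: U) (X :\: W).
have E1 : ((X :\ e) :\: U) :|: (X :\: W) = X :\: (U :&: W).
  apply/setP => x; rewrite !inE; case: (eqVneq x e) => [->|ne]; first by rewrite (negbTE eW) eX; case: (e \in U).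
  by case: (x \in U); case: (x \in W); case: (x \in X).
have E2 : ((X :\ e) :\: U) :&: (X :\: W) = X :\: (e |: (U :|: W)).
  apply/setP => x; rewrite !inE; case: (x == e); case: (x \in U); case: (x \in W); by case: (x \in X).
have E3 : U :|: (e |: W) = e |: (U :|: W) by rewrite setUCA.
have E4 : U :&: (e |: W) = U :&: W.
  apply/setP => x; rewrite !inE; case: (eqVneq x e) => [->|ne] //=; by rewrite (negbTE eU).
rewrite E1 E2 in s2; rewrite E3 E4 in s1.
have a1 := hU (e |: (U :|: W)).
have a2 := hU (U :&: W).
have sa1 : e |: (U :|: W) \subset X.
  by rewrite subUset sub1set eX subUset sUX (subset_trans sW) ?subD1set.
have sa2 : U :&: W \subset X by apply: subset_trans (subsetIl _ _) sUX.
have := a1 sa1; have := a2 sa2.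
have := ge1 W; have := ge2 (X :\ e :\: W).
rewrite -Xd //.
lia.
Qed.
End Rank.

End PartP3.
Import PartP3.

Module PartP2.
Set Implicit Arguments. Unset Strict Implicit. Unset Printing Implicit Defensive.

Lemma lexn N a b a' b' : b <= N -> N.+1 * a' + b' <= N.+1 * a + b -> a' <= a.
Proof.
move=> hb h; rewrite leqNgt; apply/negP => /(leq_mul (leqnn N.+1)); rewrite mulnS; lia.
Qed.

Section Exch.
Variable T : finType.

Lemma swap_card (B Z : {set T}) x y : x \in B -> y \notin B ->
  #|(y |: (B :\ x)) :&: Z| + (x \in Z) = #|B :&: Z| + (y \in Z).
Proof.
move=> xB yB.
rewrite (cardsD1 x (B :&: Z)) (cardsD1 y ((y |: (B :\ x)) :&: Z)).
have -> : (y |: (B :\ x)) :&: Z :\ y = B :&: Z :\ x.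
  apply/setP => z; rewrite !inE; case: (eqVneq z y) => [->|nzy] /=.
    by rewrite (negbTE yB) !andbF.
  case: (eqVneq z x) => //.
rewrite !inE xB eqxx /=; lia.
Qed.

Variable F : {set {set T}}.
Variable d : nat.
Hypothesis Fd : forall B, B \in F -> #|B| = d.
Variable B0 : {set T}.
Hypothesis B0F : B0 \in F.
Hypothesis EX : forall B1 B2 y, B1 \in F -> B2 \in F -> y \notin B1 -> y \in B2 ->
  exists2 x, x \in B1 :\: B2 & y |: (B1 :\ x) \in F.

Definition rk (A : {set T}) := \max_(B in F) #|B :&: A|.

Lemma rk_ge B A : B \in F -> #|B :&: A| <= rk A.
Proof. by move=> BF; apply: (@leq_bigmax_cond _ (fun B => B \in F)). Qed.

Lemma rk_ex A : exists2 B, B \in F & rk A = #|B :&: A|.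
Proof.
have : 0 < #|F| by apply/card_gt0P; exists B0.
by move=> /(eq_bigmax_cond (fun B => #|B :&: A|)) [B BF e]; exists B.
Qed.

Lemma chain (X Y : {set T}) : X \subset Y ->
  exists2 B, B \in F & #|B :&: X| = rk X /\ #|B :&: Y| = rk Y.
Proof.
move=> sXY.
set N := #|T|.
have cN (A : {set T}) : #|A| <= N by apply: max_card.
pose phi B := N.+1 * #|B :&: X| + #|B :&: Y|.
case: (@arg_maxnP _ B0 (fun B => B \in F) phi B0F) => B BF Bmax.
exists B => //.
have hX : #|B :&: X| = rk X.
  apply/eqP; rewrite eqn_leq rk_ge //=.
  case: (rk_ex X) => B' B'F ->.
  have := Bmax B' B'F; rewrite /phi.
  have := cN (B :&: Y); apply: lexn.
split => //.
apply/eqP; rewrite eqn_leq rk_ge //=; rewrite leqNgt; apply/negP => hlt.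
case: (rk_ex Y) => Bw BwF hBw.
have Pw : (fun B2 => (B2 \in F) && (#|B2 :&: Y| == rk Y)) Bw by rewrite BwF hBw eqxx.
case: (@arg_maxnP _ Bw (fun B2 => (B2 \in F) && (#|B2 :&: Y| == rk Y)) (fun B2 => #|B2 :&: B|) Pw)
  => B2 /andP [B2F /eqP hB2] B2max.
case: (pickP [pred x | (x \in B) && (x \notin B2) && (x \in Y)]) => [x /= /andP [/andP [xB xB2] xY]|none].
  have [x' /setDP [x'B2 x'B] B2'F] := EX B2F BF xB2 xB.
  have s1 := swap_card Y x'B2 xB2.
  have s2 := swap_card B x'B2 xB2.
  have r1 := rk_ge Y B2'F.
  rewrite (negbTE x'B) xB xY /= in s1 s2.
  have := B2max (x |: (B2 :\ x')); rewrite B2'F /=.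
  move=> /(_ _); rewrite (_ : _ == _ = true); last first.
    apply/eqP; rewrite hB2 in s1; clear -s1 r1; case: (x' \in Y) in s1 *; lia.
  move=> /(_ isT) h; clear -h s2; lia.
have [y /andP [/andP [yB2 yY] yB]] : exists y, (y \in B2) && (y \in Y) && (y \notin B).
  case: (boolP [exists y, (y \in B2) && (y \in Y) && (y \notin B)]) => [/existsP//|].
  rewrite negb_exists => /forallP hy; exfalso.
  have : B2 :&: Y \subset B :&: Y.
    apply/subsetP => z; rewrite !inE => /andP [zB2 zY]; rewrite zY andbT.
    by have := hy z; rewrite zB2 zY /= negbK.
  move/subset_leq_card; rewrite hB2 => h; clear -h hlt; lia.
have [x /setDP [xB xB2] B'F] := EX BF B2F yB yB2.
have xY : x \notin Y by have := none x; rewrite /= xB xB2 /= => ->.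
have xX : x \notin X by apply/negP => /(subsetP sXY); rewrite (negbTE xY).
have s1 := swap_card X xB yB; have s2 := swap_card Y xB yB.
rewrite (negbTE xX) (negbTE xY) yY in s1 s2.
have := Bmax _ B'F; rewrite /phi.
have : #|B :&: X| <= #|(y |: (B :\ x)) :&: X| by case: (y \in X) in s1 *; clear -s1; lia.
move/(leq_mul (leqnn N.+1)) => h1 h2; clear -h1 h2 s2; lia.
Qed.

Lemma rk_rankfun : [/\ rk set0 = 0,
      (forall A B : {set T}, A \subset B -> rk A <= rk B),
      (forall (A : {set T}) x, rk (x |: A) <= (rk A).+1) &
      (forall A B : {set T}, rk (A :|: B) + rk (A :&: B) <= rk A + rk B)].
Proof.
split.
- apply/eqP; rewrite -leqn0; apply/bigmax_leqP => B _; by rewrite setI0 cards0.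
- move=> A C sAC; apply/bigmax_leqP => B BF; apply: leq_trans (rk_ge C BF).
  by apply: subset_leq_card; apply: setIS.
- move=> A x; apply/bigmax_leqP => B BF.
  have := rk_ge A BF; rewrite setIUr cardsU.
  have : #|B :&: [set x]| <= 1 by rewrite -(cards1 x); apply: subset_leq_card; apply: subsetIr.
  lia.
- move=> A C.
  have [B BF [h1 h2]] := chain (subset_trans (subsetIl A C) (subsetUl A C)).
  rewrite -h1 -h2 addnC setIIr setIUr addnC cardsUI.
  by apply: leq_add; apply: rk_ge.
Qed.
End Exch.

End PartP2.
Import PartP2.

Module PartP1a.
Set Implicit Arguments. Unset Strict Implicit. Unset Printing Implicit Defensive.
Local Open Scope ring_scope.

Section EvPos.
Variable R : realType.

Lemma eventually_pos (I : finType) (P : pred I) (c : I -> R) (e : I -> nat) (i0 : I) :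
  P i0 -> 0 < c i0 -> (forall i, P i -> i != i0 -> c i != 0 -> (e i < e i0)%N) ->
  exists2 t : R, 0 < t & 0 < \sum_(i | P i) c i * t ^+ e i.
Proof.
move=> Pi0 c0 hlt.
case E: (e i0) => [|m].
  exists 1 => //; rewrite (bigD1 i0) //= big1 ?addr0 ?expr1n ?mulr1 //.
  move=> i /andP [Pi ni]; case: (eqVneq (c i) 0) => [->|nz]; first by rewrite mul0r.
  by have := hlt i Pi ni nz; rewrite E.
set L := \sum_(i | P i && (i != i0)) `|c i|.
have L0 : 0 <= L by apply: sumr_ge0 => i _; exact: normr_ge0.
pose t := 1 + L / c i0.
have t1 : 1 <= t by rewrite /t lerDl divr_ge0 // ltW.
have t0 : 0 < t by apply: lt_le_trans t1.
exists t => //.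
rewrite (bigD1 i0) //= E.
have hb : forall i, P i && (i != i0) -> - (`|c i| * t ^+ m) <= c i * t ^+ e i.
  move=> i /andP [Pi ni]; case: (eqVneq (c i) 0) => [->|nz].
    by rewrite normr0 !mul0r oppr0.
  have lt := hlt i Pi ni nz; rewrite E ltnS in lt.
  have h1 : t ^+ e i <= t ^+ m := ler_weXn2l t1 lt.
  have h2 : 0 <= t ^+ e i by rewrite exprn_ge0 // ltW.
  have h3 : - (`|c i| * t ^+ e i) <= c i * t ^+ e i.
    by rewrite -mulNr ler_wpM2r // lerNnormlW.
  apply: le_trans h3; rewrite lerN2; apply: ler_wpM2l => //; exact: normr_ge0.
have hs : - (L * t ^+ m) <= \sum_(i | P i && (i != i0)) c i * t ^+ e i.
  rewrite /L mulr_suml -sumrN; apply: ler_sum => i hi; exact: hb.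
have ht : c i0 * t ^+ m.+1 = (c i0 + L) * t ^+ m.
  rewrite exprS mulrA; congr (_ * _); rewrite /t mulrDr mulr1 mulrCA divff ?mulr1 //.
  by rewrite gt_eqF.
rewrite ht; have tm : 0 < t ^+ m by rewrite exprn_gt0.
have : 0 < c i0 * t ^+ m by rewrite mulr_gt0.
move: hs; rewrite mulrDl; lra.
Qed.

Local Open Scope complex_scope.

Lemma Im_realM (r : R) (z : R[i]) : complex.Im (r%:C * z) = r * complex.Im z.
Proof. case: z => a b /=. by simpc. Qed.

Lemma Im_divN (A B : R[i]) : A != 0 -> complex.Im (- B / A) =
   complex.Im (- B * conjc A) / (complex.Re A ^+ 2 + complex.Im A ^+ 2).
Proof.
case: A => a1 a2; case: B => b1 b2 => nz.
have n0 : a1 ^+ 2 + a2 ^+ 2 != 0.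
  apply/negP => /eqP h; move: nz; rewrite eq_complex /=.
  move: h => /eqP; rewrite paddr_eq0 ?sqr_ge0 // !sqrf_eq0 => /andP [/eqP -> /eqP ->].
  by rewrite !eqxx.
simpc; rewrite /=; field; exact: n0.
Qed.

Lemma kappa_val : complex.Im (- ((Complex (2:R) 1) ^+ 2 * - 'i)) = 3.
Proof. simpc; rewrite /=; lra. Qed.

End EvPos.

End PartP1a.
Import PartP1a.

Module PartP1b.
Set Implicit Arguments. Unset Strict Implicit. Unset Printing Implicit Defensive.
Local Open Scope ring_scope.
Local Open Scope complex_scope.

Section Core.
Variable R : realType.
Variable n : nat.
Variable mu : {ffun {set 'I_n} -> R}.
Variables (y a b : 'I_n) (w : 'I_n -> nat) (Ss Ts : {set 'I_n}).

Definition Wt (X : {set 'I_n}) := (\sum_(e in X) w e)%N.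

Definition zeta (e : 'I_n) : R[i] := if (e == a) || (e == b) then Complex 2 1 else 'i.
Definition zt (t : R) (e : 'I_n) : R[i] := (t ^+ w e)%:C * zeta e.
Definition Acoef t := \sum_(S : {set 'I_n} | y \in S) (mu S)%:C * \prod_(e in S :\ y) zt t e.
Definition Bcoef t := \sum_(S : {set 'I_n} | y \notin S) (mu S)%:C * \prod_(e in S) zt t e.
Definition kap (p : {set 'I_n} * {set 'I_n}) :=
  complex.Im (- (\prod_(e in p.2) zeta e * conjc (\prod_(e in p.1 :\ y) zeta e))).

Lemma pf_split t xi : partition_function mu (fun e => if e == y then xi else zt t e)
  = xi * Acoef t + Bcoef t.
Proof.
rewrite /partition_function (bigID (fun S : {set 'I_n} => y \in S)) /=; congr (_ + _).
  rewrite /Acoef mulr_sumr; apply: eq_bigr => S yS.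
  rewrite (big_setD1 y yS) /= eqxx mulrCA; congr (_ * (_ * _)).
  apply: eq_bigr => e; rewrite !inE => /andP [ne _]; by rewrite (negbTE ne).
apply: eq_bigr => S yS; congr (_ * _); apply: eq_bigr => e eS.
case: eqP => // ey; by rewrite -ey eS in yS.
Qed.

Lemma prod_zt t (X : {set 'I_n}) : \prod_(e in X) zt t e = (t ^+ Wt X)%:C * \prod_(e in X) zeta e.
Proof.
rewrite big_split /= -rmorph_prod; congr (_%:C * _).
by rewrite /Wt (big_morph (fun m : nat => t ^+ m) (exprD t) (expr0 t)).
Qed.

Lemma conjR (r : R) : conjc (r%:C) = r%:C :> R[i].
Proof. by rewrite /conjc /= oppr0. Qed.

Lemma conjR' (r : R) : (r -i* 0) = r%:C :> R[i].
Proof. by rewrite oppr0. Qed.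

Lemma ImD (u v : R[i]) : complex.Im (u + v) = complex.Im u + complex.Im v.
Proof. by case: u => ? ?; case: v => ? ?. Qed.
Lemma Im0 : complex.Im (0 : R[i]) = 0. Proof. by []. Qed.

Lemma G_expand t : complex.Im (- Bcoef t * conjc (Acoef t)) =
  \sum_(p : {set 'I_n} * {set 'I_n} | (y \in p.1) && (y \notin p.2))
     (mu p.1 * mu p.2 * kap p) * t ^+ (Wt (p.1 :\ y) + Wt p.2).
Proof.
rewrite /Acoef /Bcoef rmorph_sum mulNr mulr_sumr -sumrN.
rewrite (eq_bigr (fun S : {set 'I_n} => \sum_(T : {set 'I_n} | y \notin T)
    - ((mu T)%:C * \prod_(e in T) zt t e * conjc ((mu S)%:C * \prod_(e in S :\ y) zt t e)))); last first.
  by move=> S _; rewrite mulr_suml -sumrN.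
rewrite pair_big /= (big_morph (@complex.Im R) ImD Im0); apply: eq_bigr => [[S T]] /= _.
rewrite !prod_zt !rmorphM /= !conjR'.
set PT := \prod_(e in T) zeta e; set PS := \prod_(e in S :\ y) zeta e.
have -> : (mu T)%:C * ((t ^+ Wt T)%:C * PT) * ((mu S)%:C * ((t ^+ Wt (S :\ y))%:C * conjc PS))
   = (mu S * mu T * t ^+ (Wt (S :\ y) + Wt T))%:C * (PT * conjc PS).
  rewrite exprD !rmorphM /=; ring.
by rewrite -mulrN Im_realM /kap /= -/PT -/PS; ring.
Qed.

End Core.

End PartP1b.
Import PartP1b.

Module PartP1c.
Set Implicit Arguments. Unset Strict Implicit. Unset Printing Implicit Defensive.
Local Open Scope ring_scope.
Local Open Scope complex_scope.

Section Core2.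
Variable R : realType.
Variable n : nat.
Variable mu : {ffun {set 'I_n} -> R}.
Variables (y a b : 'I_n) (w : 'I_n -> nat) (Ss Ts : {set 'I_n}).
Hypothesis mu0 : forall S, 0 <= mu S.
Hypothesis muS : 0 < mu Ss.
Hypothesis muT : 0 < mu Ts.
Hypothesis ySs : y \in Ss.
Hypothesis yTs : y \notin Ts.
Hypothesis topS : forall S, 0 < mu S -> y \in S -> S != Ss -> (Wt w (S :\ y) < Wt w (Ss :\ y))%N.
Hypothesis topT : forall T, 0 < mu T -> y \notin T -> T != Ts -> (Wt w T < Wt w Ts)%N.
Hypotheses (aT : a \in Ts) (bT : b \in Ts) (ab : a != b) (aS : a \notin Ss) (bS : b \notin Ss).
Hypothesis card : #|Ts| = (#|Ss :\ y|).+1.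

Lemma kap_top : kap R y a b (Ss, Ts) = 3.
Proof.
rewrite /kap /=.
set m := #|Ss :\ y|.
have m1 : (1 <= m)%N.
  have : (2 <= #|Ts|)%N.
    rewrite (cardsD1 a) aT (cardsD1 b) !inE eq_sym ab bT; done.
  by rewrite card.
have hT : \prod_(e in Ts) zeta R a b e = Complex 2 1 * (Complex 2 1 * 'i ^+ m.-1).
  have bTa : b \in Ts :\ a by rewrite !inE eq_sym ab bT.
  rewrite (big_setD1 a aT) (big_setD1 b bTa) /zeta eqxx /= eqxx orbT.
  congr (_ * (_ * _)); rewrite (eq_bigr (fun _ => 'i)); last first.
    by move=> e; rewrite !inE => /andP [eb /andP [ea _]]; rewrite (negbTE ea) (negbTE eb).
  rewrite prodr_const; congr (_ ^+ _).
  move: card; rewrite (cardsD1 a Ts) aT (cardsD1 b (Ts :\ a)) !inE eq_sym ab bT /=.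
  rewrite -/m => h; clear -h m1; case: (m) m1 h => // k _ /=; lia.
have hS : \prod_(e in Ss :\ y) zeta R a b e = 'i ^+ m.
  rewrite (eq_bigr (fun _ => 'i)) ?prodr_const //.
  move=> e; rewrite !inE => /andP [_ eS]; rewrite /zeta.
  have -> : (e == a) = false by apply/negP => /eqP ea; move: aS; rewrite -ea eS.
  have -> : (e == b) = false by apply/negP => /eqP eb; move: bS; rewrite -eb eS.
  done.
have ci : forall k, conjc ('i ^+ k : R[i]) = (- 'i) ^+ k.
  move=> k; rewrite rmorphXn; congr (_ ^+ _); apply/eqP; rewrite eq_complex /= oppr0 !eqxx //.
have E : Complex (2:R) 1 * (Complex 2 1 * 'i ^+ m.-1) * conjc ('i ^+ m) = Complex 2 1 ^+ 2 * - 'i.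
  rewrite ci.
  have -> : m = m.-1.+1 by case: (m) m1.
  rewrite exprSr.
  transitivity (Complex (2:R) 1 * Complex 2 1 * (('i : R[i]) ^+ m.-1 * (- 'i) ^+ m.-1) * - 'i); first ring.
  rewrite -exprMn.
  have -> : ('i : R[i]) * - 'i = 1 by rewrite mulrN -expr2 sqr_i opprK.
  by rewrite expr1n mulr1 expr2.
rewrite hT hS E; exact: kappa_val.
Qed.

Lemma core_contra : ~ strong_rayleigh mu.
Proof.
move=> SR.
pose c (p : {set 'I_n} * {set 'I_n}) := mu p.1 * mu p.2 * kap R y a b p.
pose ex (p : {set 'I_n} * {set 'I_n}) := (Wt w (p.1 :\ y) + Wt w p.2)%N.
have [t t0 gpos] : exists2 t : R, 0 < t &
    0 < \sum_(p : {set 'I_n} * {set 'I_n} | (y \in p.1) && (y \notin p.2)) c p * t ^+ ex p.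
  apply: (@eventually_pos R _ _ c ex (Ss, Ts)).
  - by rewrite /= ySs yTs.
  - by rewrite /c kap_top /= !mulr_gt0.
  move=> [S T] /= /andP [yS yT] neq cnz.
  have mS : 0 < mu S.
    by rewrite lt_def mu0 andbT; apply/negP => /eqP h; move: cnz; rewrite /c /= h !mul0r eqxx.
  have mT : 0 < mu T.
    by rewrite lt_def mu0 andbT; apply/negP => /eqP h; move: cnz; rewrite /c /= h mulr0 mul0r eqxx.
  rewrite /ex /=.
  case: (eqVneq S Ss) => [eS|nS]; case: (eqVneq T Ts) => [eT|nT].
  - by move: neq; rewrite eS eT eqxx.
  - by rewrite eS ltn_add2l topT.
  - by rewrite eT ltn_add2r topS.
  - have h1 := topS mS yS nS; have h2 := topT mT yT nT; rewrite -addnS; apply: leq_add => //; exact: ltnW.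
rewrite /c /ex -G_expand in gpos.
set A := Acoef mu y a b w t in gpos.
set B := Bcoef mu y a b w t in gpos.
have A0 : A != 0.
  by apply/negP => /eqP A0; move: gpos; rewrite A0 rmorph0 mulr0 /= ltxx.
pose xi := - B / A.
have Imxi : 0 < complex.Im xi.
  rewrite /xi Im_divN // divr_gt0 //.
  rewrite lt_def addr_ge0 ?sqr_ge0 // andbT; apply/negP; move: A0.
  case: (A) => a1 a2 /=; rewrite eq_complex /= => h /eqP h2; move: h.
  move: h2 => /eqP; rewrite paddr_eq0 ?sqr_ge0 // !sqrf_eq0 => /andP [/eqP -> /eqP ->].
  by rewrite !eqxx.
have := SR (fun e => if e == y then xi else zt a b w t e).
rewrite pf_split /xi divfK // addNr eqxx => h; suff: ~~ true by []; apply: h => j.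
case: (j == y) => //.
rewrite /zt Im_realM; apply: mulr_gt0; first by rewrite exprn_gt0.
by rewrite /zeta; case: (_ || _).
Qed.
End Core2.

End PartP1c.
Import PartP1c.

Module PartP1d.
Set Implicit Arguments. Unset Strict Implicit. Unset Printing Implicit Defensive.
Local Open Scope ring_scope.

Lemma lt_lex N a a' b b' : (b <= N)%N -> (a < a')%N -> (N.+1 * a + b < N.+1 * a' + b')%N.
Proof.
move=> hb h; have : (N.+1 * a.+1 <= N.+1 * a')%N by apply: leq_mul.
rewrite mulnS; lia.
Qed.

Lemma lexn' N a b a' b' : (b <= N)%N -> (N.+1 * a' + b' <= N.+1 * a + b)%N -> (a' <= a)%N.
Proof.
move=> hb h; rewrite leqNgt; apply/negP => /(lt_lex b' hb); lia.
Qed.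

Lemma Wt_lin n (f g : 'I_n -> nat) M (X : {set 'I_n}) :
  Wt (fun e => M * f e + g e)%N X = (M * Wt f X + Wt g X)%N.
Proof. by rewrite /Wt big_split /= big_distrr. Qed.

Lemma Wt_ind n (Z X : {set 'I_n}) : Wt (fun e => nat_of_bool (e \in Z)) X = #|X :&: Z|.
Proof.
rewrite /Wt -sum1_card big_mkcond [RHS]big_mkcond /=; apply: eq_bigr => e _.
by rewrite !inE; case: (e \in X); case: (e \in Z).
Qed.

Lemma cardI_le n (X : {set 'I_n}) : (#|X| <= n)%N.
Proof. by have := max_card X; rewrite card_ord. Qed.

Lemma sr_exchange (R : realType) n (mu : {ffun {set 'I_n} -> R}) d :
  (forall S, 0 <= mu S) -> strong_rayleigh mu -> constant_sum mu d ->
  forall B1 B2 y, 0 < mu B1 -> 0 < mu B2 -> y \notin B1 -> y \in B2 ->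
  exists2 x, x \in B1 :\: B2 & 0 < mu (y |: (B1 :\ x)).
Proof.
move=> mu0 SR CS B1 B2 y m1 m2 yB1 yB2.
case: (boolP [exists x, (x \in B1 :\: B2) && (0 < mu (y |: (B1 :\ x)))]).
  by move=> /existsP [x /andP [h1 h2]]; exists x.
rewrite negb_exists => /forallP hno; exfalso.
have cs S : 0 < mu S -> #|S| = d by move=> h; apply: CS; rewrite lt0r_neq0.
set C := B1 :&: B2.
set M := n.+1.
pose prim (e : 'I_n) := (M * (e \in C) + (e \in B1))%N.
pose W0 (S : {set 'I_n}) := Wt prim (S :\ y).
have PB2 : (0 < mu B2) && (y \in B2) by rewrite m2 yB2.
case: (@arg_maxnP _ B2 (fun S => (0 < mu S) && (y \in S)) W0 PB2) => Ss /andP [mSs ySs] Smax.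
pose w (e : 'I_n) := (M * prim e + (e \in Ss))%N.
have Wprim X : Wt prim X = (M * #|X :&: C| + #|X :&: B1|)%N by rewrite Wt_lin !Wt_ind.
have Ww X : Wt w X = (M * Wt prim X + #|X :&: Ss|)%N by rewrite Wt_lin Wt_ind.
have dB1 := cs _ m1.
have dSs := cs _ mSs.
have cSs : #|Ss :\ y| = d.-1 by move: dSs; rewrite (cardsD1 y) ySs; lia.
have topT : forall T, 0 < mu T -> y \notin T -> T != B1 -> (Wt w T < Wt w B1)%N.
  move=> T mT yT nT.
  have h1 : (#|T :&: B1| < #|B1|)%N.
    rewrite ltn_neqAle subset_leq_card ?subsetIr // andbT.
    apply/negP => /eqP h; move: nT; rewrite eq_sym eqEcard.
    have -> : B1 \subset T by apply/setIidPr; apply/eqP; rewrite eqEcard subsetIr h leqnn.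
    by rewrite cs // dB1 leqnn.
  have h2 : (#|T :&: C| <= #|B1 :&: C|)%N.
    by rewrite (setIidPr (subsetIl B1 B2)) subset_leq_card ?subsetIr.
  have h3 : (Wt prim T < Wt prim B1)%N.
    rewrite !Wprim setIid.
    have := leq_mul (leqnn M) h2; lia.
  rewrite !Ww.
  have := cardI_le (T :&: Ss); move=> hc.
  by apply: lt_lex.
have topS : forall S, 0 < mu S -> y \in S -> S != Ss -> (Wt w (S :\ y) < Wt w (Ss :\ y))%N.
  move=> S mS yS nS.
  have := Smax S; rewrite mS yS /= => /(_ isT) hle.
  rewrite !Ww.
  move: hle; rewrite leq_eqVlt => /orP [/eqP heq|hlt]; last first.
    by apply: lt_lex => //; apply: cardI_le.
  rewrite /W0 in heq; rewrite heq ltn_add2l.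
  rewrite (setIidPl (subD1set Ss y)).
  rewrite ltn_neqAle; apply/andP; split; last first.
    by apply: subset_leq_card; apply/subsetP => e; rewrite !inE => /andP [/andP [-> _] ->].
  apply/negP => /eqP h; move: nS.
  have hsub : Ss :\ y \subset S :\ y.
    have e1 : (S :\ y) :&: Ss \subset S :\ y by apply: subsetIl.
    have e2 : (S :\ y) :&: Ss = Ss :\ y.
      apply/eqP; rewrite eqEcard h leqnn andbT.
      by apply/subsetP => e; rewrite !inE => /andP [/andP [-> _] ->].
    by rewrite -e2.
  have e3 : S :\ y = Ss :\ y.
    apply/eqP; rewrite eq_sym eqEcard hsub /=.
    rewrite cSs; move: (cs _ mS); rewrite (cardsD1 y S) yS /= => hh; clear -hh; lia.
  by move=> /negP; apply; rewrite -(setD1K yS) e3 setD1K.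
have CSs : C \subset Ss :\ y.
  have := Smax B2 PB2; rewrite /W0 !Wprim.
  have CB2 : (B2 :\ y) :&: C = C.
    apply/setIidPr/subsetP => e; rewrite !inE => /andP [eB1 eB2]; rewrite eB2 andbT.
    by apply/negP => /eqP ey; move: yB1; rewrite -ey eB1.
  rewrite CB2 => h.
  have hc : (#|C| <= #|(Ss :\ y) :&: C|)%N.
    apply: (@lexn' n _ #|(Ss :\ y) :&: B1| _ #|(B2 :\ y) :&: B1|) => //; exact: cardI_le.
  have : (Ss :\ y) :&: C = C.
    apply/eqP; rewrite eqEcard subsetIr hc.
    done.
  by move/setIidPr.
have hB1S : #|B1 :\: Ss| = (#|(Ss :\ y) :\: B1|).+1.
  have e1 := cardsID Ss B1.
  have e2 := cardsID B1 (Ss :\ y).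
  have e3 : B1 :&: Ss = (Ss :\ y) :&: B1.
    apply/setP => e; rewrite !inE; case: (eqVneq e y) => [->|ne]; first by rewrite (negbTE yB1) andbF.
    by rewrite andbC.
  move: e1 e2; rewrite e3 cSs dB1.
  have d1 : (1 <= d)%N by rewrite -dSs; apply/card_gt0P; exists y.
  lia.
have two : (2 <= #|B1 :\: Ss|)%N.
  rewrite hB1S ltnS lt0n; apply/negP => /eqP h0.
  have sub : Ss :\ y \subset B1.
    apply/subsetP => e eS; apply/negPn/negP => eB.
    have : e \in (Ss :\ y) :\: B1 by rewrite inE eS eB.
    by move: h0 => /eqP; rewrite cards_eq0 => /eqP ->; rewrite inE.
  move: hB1S; rewrite h0 => /eqP /cards1P [x hx].
  have xin : x \in B1 :\: Ss by rewrite hx set11.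
  have xB1 : x \in B1 by move: xin; rewrite inE => /andP [].
  have xSs : x \notin Ss by move: xin; rewrite inE => /andP [].
  have eSB : Ss :\ y = B1 :\ x.
    apply/eqP; rewrite eqEcard; apply/andP; split.
      apply/subsetP => e eS; rewrite !inE (subsetP sub _ eS) andbT.
      by apply/negP => /eqP ex; move: eS; rewrite ex inE (negbTE xSs) andbF.
    rewrite cSs; move: dB1; rewrite (cardsD1 x B1) xB1 /= => hh; clear -hh; lia.
  have xB2 : x \notin B2.
    apply/negP => xB2; have : x \in C by rewrite inE xB1.
    by move/(subsetP CSs); rewrite inE (negbTE xSs) andbF.
  have := hno x; rewrite inE xB1 xB2 /= -eSB setD1K //.
  by rewrite mSs.
have [a aB] : exists a, a \in B1 :\: Ss by apply/card_gt0P; lia.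
have [b bB] : exists b, b \in (B1 :\: Ss) :\ a.
  apply/card_gt0P; move: two; rewrite (cardsD1 a) aB; lia.
move: bB; rewrite inE => /andP [ba bB].
move: aB bB; rewrite !inE => /andP [aS aB1] /andP [bS bB1].
have d1 : (1 <= d)%N by rewrite -dSs; apply/card_gt0P; exists y.
apply: (@core_contra R n mu y a b w Ss B1) => //.
- by move: ba; rewrite inE eq_sym.
- rewrite cSs dB1; clear -d1; lia.
Qed.

End PartP1d.
Import PartP1d.

Module PartP4.
Set Implicit Arguments. Unset Strict Implicit. Unset Printing Implicit Defensive.
Local Open Scope ring_scope.

Lemma bound_le (R : realType) (k : nat) : (2 <= k)%N ->
  (1 / Num.sqrt (k.-1)%:R - 1 / Num.sqrt k%:R) ^+ 2 <= 1 / (k%:R : R).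
Proof.
move=> hk.
set a := Num.sqrt (k.-1)%:R : R; set b := Num.sqrt k%:R : R.
have k0 : 0 < (k.-1)%:R :> R by rewrite ltr0n; lia.
have a0 : 0 < a by rewrite sqrtr_gt0.
have b0 : 0 < b by rewrite sqrtr_gt0 ltr0n; lia.
have a2 : a ^+ 2 = (k.-1)%:R by rewrite sqr_sqrtr // ltW.
have b2 : b ^+ 2 = k%:R by rewrite sqr_sqrtr // ler0n.
have sq (x y : R) : 0 <= x -> 0 <= y -> (x ^+ 2 <= y ^+ 2) = (x <= y).
  by move=> hx hy; have := @ler_sqr R x y; rewrite !nnegrE => /(_ hx hy).
have ab : a <= b.
  by rewrite -(sq a b (ltW a0) (ltW b0)) a2 b2 ler_nat; lia.
have b2a : b <= 2 * a.
  have a20 : 0 <= 2 * a by rewrite mulr_ge0 // ltW.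
  rewrite -(sq b _ (ltW b0) a20) exprMn a2 b2 -natrX -natrM ler_nat.
  have -> : (2 ^ 2 = 4)%N by []. lia.
have h1 : 0 <= 1 / a - 1 / b.
  rewrite subr_ge0 !div1r lef_pV2 ?posrE //.
have h2 : 1 / a - 1 / b <= 1 / b.
  rewrite -subr_ge0.
  have -> : 1 / b - (1 / a - 1 / b) = (2 * a - b) / (a * b).
    by field; rewrite ?gt_eqF //.
  by rewrite divr_ge0 ?subr_ge0 // mulr_ge0 // ltW.
have -> : 1 / (k%:R : R) = (1 / b) ^+ 2 by rewrite expr_div_n expr1n b2.
by rewrite sq // divr_ge0 // ltW.
Qed.

Lemma sum_eq_le (I : finType) (f g : I -> nat) :
  (forall i, f i <= g i)%N -> (\sum_i g i <= \sum_i f i)%N -> forall i, f i = g i.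
Proof.
move=> hle hs i; apply/eqP; rewrite eqn_leq hle /=; rewrite leqNgt; apply/negP => hlt.
have : (\sum_i f i < \sum_i g i)%N.
  rewrite (bigD1 i) //= [X in (_ < X)%N](bigD1 i) //=.
  rewrite -addSn; apply: leq_add => //; apply: leq_sum => j _; exact: hle.
lia.
Qed.

Lemma card_slices k n (I : {set 'I_k * 'I_n}) :
  #|I| = (\sum_(a < k) #|[set x | (a, x) \in I]|)%N.
Proof.
rewrite -sum1_card big_mkcond /=.
rewrite (eq_bigr (fun a => \sum_x (if (a, x) \in I then 1 else 0))%N); last first.
  by move=> a _; rewrite -sum1_card big_mkcond /=; apply: eq_bigr => x _; rewrite inE.
rewrite pair_bigA /=; apply: eq_bigr => [[a x]] _ //.
Qed.


End PartP4.
Import PartP4.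

Local Open Scope ring_scope.

Theorem theorem8p2 (R : realType) (n k d : nat) (mu : {ffun {set 'I_n} -> R}) :
  (2 <= k)%N ->
  prob_measure mu -> strong_rayleigh mu -> constant_sum mu d ->
  (forall i : 'I_n,
     \sum_(S : {set 'I_n} | i \in S) mu S
       <= (1 / Num.sqrt (k.-1)%:R - 1 / Num.sqrt k%:R) ^+ 2) ->
  exists F : 'I_k -> {set 'I_n},
    (forall a, F a \in mu_support mu) /\
    (forall a b, a != b -> [disjoint F a & F b]).
Proof.
move=> hk [mu0 musum] SR CS marg.
set F := mu_support mu.
have inF S : (S \in F) = (0 < mu S) by rewrite inE.
have [B0 B0F] : exists B0, B0 \in F.
  case: (boolP [exists S, 0 < mu S]) => [/existsP [S hS]|]; first by exists S; rewrite inF.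
  rewrite negb_exists => /forallP h; exfalso.
  have : \sum_(S : {set 'I_n}) mu S = 0.
    by apply: big1 => S _; apply/eqP; rewrite eq_le mu0 andbT leNgt h.
  by rewrite musum => /eqP; rewrite oner_eq0.
have Fd B : B \in F -> #|B| = d by rewrite inF => h; apply: CS; rewrite lt0r_neq0.
have EX : forall B1 B2 y, B1 \in F -> B2 \in F -> y \notin B1 -> y \in B2 ->
    exists2 x, x \in B1 :\: B2 & y |: (B1 :\ x) \in F.
  move=> B1 B2 y; rewrite !inF => h1 h2 h3 h4.
  by have [x hx hm] := sr_exchange mu0 SR CS h1 h2 h3 h4; exists x => //; rewrite inF.
have [rk0 rkm rku rks] := rk_rankfun B0F EX.
have rkle A : (rk F A <= d)%N.
  apply/bigmax_leqP => B BF; rewrite -(Fd B BF); apply: subset_leq_card; exact: subsetIl.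
have rkcard A : (rk F A <= #|A|)%N.
  apply/bigmax_leqP => B BF; apply: subset_leq_card; exact: subsetIr.
pose sl (U : {set 'I_k * 'I_n}) (a : 'I_k) := [set x | (a, x) \in U].
pose r1 (U : {set 'I_k * 'I_n}) := (\sum_(a < k) rk F (sl U a))%N.
pose r2 (U : {set 'I_k * 'I_n}) := #|[set u.2 | u in U]|.
have slU U V a : sl (U :|: V) a = sl U a :|: sl V a by apply/setP => x; rewrite !inE.
have slI U V a : sl (U :&: V) a = sl U a :&: sl V a by apply/setP => x; rewrite !inE.
have h1 : rankfun r1.
  split.
  - apply: big1 => a _; rewrite (_ : sl set0 a = set0) //; by apply/setP => x; rewrite !inE.
  - move=> A B sAB; apply: leq_sum => a _; apply: rkm; apply/subsetP => x; rewrite !inE.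
    exact: (subsetP sAB).
  - move=> A [a0 x0]; rewrite /r1 (bigD1 a0) //= [X in (_ <= X.+1)%N](bigD1 a0) //=.
    have -> : sl ((a0, x0) |: A) a0 = x0 |: sl A a0.
      by apply/setP => x; rewrite !inE xpair_eqE eqxx.
    rewrite (eq_bigr (fun a => rk F (sl A a))).
      by rewrite -addSn; apply: leq_add (rku _ _) _.
    move=> a na; congr (rk F _); apply/setP => x; rewrite !inE xpair_eqE (negbTE na) //.
  - move=> A B; rewrite /r1 -!big_split /=; apply: leq_sum => a _.
    by rewrite slU slI; apply: rks.
have h2 : rankfun r2.
  split.
  - by rewrite /r2 imset0 cards0.
  - by move=> A B sAB; apply: subset_leq_card; apply: imsetS.
  - by move=> A x; rewrite /r2 imsetU1 cardsU1; case: (_ \notin _).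
  - move=> A B; rewrite /r2 imsetU -[X in (_ <= X)%N]cardsUI leq_add2l; apply: subset_leq_card.
    apply/subsetP => z /imsetP [u]; rewrite inE => /andP [uA uB] ->.
    by rewrite inE !imset_f.
have bnd x : \sum_(S : {set 'I_n} | x \in S) mu S <= 1 / k%:R := le_trans (marg x) (bound_le R hk).
have key A : (k * d <= k * rk F A + #|~: A|)%N.
  have kpos : 0 < k%:R :> R by rewrite ltr0n; lia.
  have E1 : d%:R = \sum_(S : {set 'I_n}) mu S * #|S|%:R :> R.
    rewrite (eq_bigr (fun S : {set 'I_n} => mu S * d%:R)); last first.
      move=> S _; case: (eqVneq (mu S) 0) => [->|nz]; first by rewrite !mul0r.
      by rewrite CS.
    by rewrite -mulr_suml musum mul1r.
  have E2 (S : {set 'I_n}) : #|S|%:R = #|S :&: A|%:R + #|S :\: A|%:R :> R.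
    by rewrite -natrD cardsID.
  have E3 : \sum_(S : {set 'I_n}) mu S * #|S :&: A|%:R <= (rk F A)%:R :> R.
    apply: le_trans (_ : \sum_(S : {set 'I_n}) mu S * (rk F A)%:R <= _); last by rewrite -mulr_suml musum mul1r.
    apply: ler_sum => S _; case: (eqVneq (mu S) 0) => [->|nz]; first by rewrite !mul0r.
    apply: ler_wpM2l => //; rewrite ler_nat; apply: rk_ge; by rewrite inF lt_def nz mu0.
  have E4 : \sum_(S : {set 'I_n}) mu S * #|S :\: A|%:R = \sum_(x in ~: A) \sum_(S : {set 'I_n} | x \in S) mu S :> R.
    rewrite (eq_bigr (fun S : {set 'I_n} => \sum_(x in ~: A) (if x \in S then mu S else 0))); last first.
      move=> S0 _; rewrite -sum1_card natr_sum mulr_sumr.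
      rewrite big_mkcond [RHS]big_mkcond /=; apply: eq_bigr => x _; rewrite !inE.
      by case: (x \in S0); case: (x \in A); rewrite /= ?mulr1.
    rewrite exchange_big /=; apply: eq_bigr => x _; by rewrite [RHS]big_mkcond.
  have E5 : \sum_(x in ~: A) \sum_(S : {set 'I_n} | x \in S) mu S <= #|~: A|%:R / k%:R :> R.
    apply: le_trans (ler_sum _ (fun x _ => bnd x)) _.
    by rewrite sumr_const -(mulr_natl _ #|~: A|) div1r mulr1 mulrC mulr_natr.
  have : (k * d)%:R <= (k * rk F A + #|~: A|)%:R :> R.
    rewrite natrM natrD natrM.
    have : d%:R <= (rk F A)%:R + #|~: A|%:R / k%:R :> R.
      rewrite E1 (eq_bigr (fun S : {set 'I_n} => mu S * #|S :&: A|%:R + mu S * #|S :\: A|%:R)); last first.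
        by move=> S0 _; rewrite E2 mulrDr.
      rewrite big_split /= E4; exact: lerD.
    rewrite -(ler_pM2l kpos) mulrDr => h; apply: le_trans h _.
    by rewrite mulrCA divff ?mulr1 // gt_eqF.
  by rewrite ler_nat.
have hU : forall U : {set 'I_k * 'I_n}, U \subset [set: 'I_k * 'I_n] ->
    (k * d <= r1 U + r2 ([set: 'I_k * 'I_n] :\: U))%N.
  move=> U _; set A := [set x | [forall a, (a, x) \in U]].
  have r1ge : (k * rk F A <= r1 U)%N.
    have : (\sum_(a < k) rk F A <= r1 U)%N.
      apply: leq_sum => a _; apply: rkm; apply/subsetP => x; rewrite !inE => /forallP; exact.
    by rewrite sum_nat_const card_ord.
  have r2ge : (#|~: A| <= r2 ([set: 'I_k * 'I_n] :\: U))%N.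
    apply: subset_leq_card; apply/subsetP => x; rewrite !inE negb_forall => /existsP [a ha].
    by apply/imsetP; exists (a, x) => //; rewrite !inE ha.
  by apply: leq_trans (key A) _; apply: leq_add.
have [I [_ i1 i2 mI]] := @matroid_intersection _ #|[set: 'I_k * 'I_n]| [set: 'I_k * 'I_n]
   r1 r2 (k * d) (leqnn _) h1 h2 hU.
have cI := card_slices I.
have e1 := @sum_eq_le _ (fun a => rk F (sl I a)) (fun a => #|sl I a|) (fun a => rkcard _).
have e1' : forall a, rk F (sl I a) = #|sl I a|.
  by apply: e1; rewrite -cI -i1.
have e2 : forall a, #|sl I a| = d.
  apply: (@sum_eq_le _ (fun a => #|sl I a|) (fun _ => d)).
    by move=> a /=; rewrite -e1' rkle.
  by rewrite sum_nat_const card_ord -cI.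
exists (sl I); split.
  move=> a; have [B BF hB] := rk_ex B0F (sl I a).
  have hsub : sl I a \subset B.
    have : B :&: sl I a = sl I a.
      by apply/eqP; rewrite eqEcard subsetIr -hB e1' leqnn.
    by move/setIidPr.
  have -> : sl I a = B by apply/eqP; rewrite eqEcard hsub Fd // e2 leqnn.
  exact: BF.
move=> a b ab.
have inj : {in I &, injective snd} by apply/imset_injP; apply/eqP; exact: i2.
rewrite -setI_eq0; apply/eqP/setP => x; rewrite !inE; apply/negP => /andP [ha hb].
by have := inj _ _ ha hb erefl; case=> /eqP; rewrite (negbTE ab).
Qed.
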